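(* Let $G$ be a finite group and $n = \exp(G)$. Suppose the Galois group $\mathrm{Gal}(\mathbb{Q}_n:\mathbb{Q})$ acts on the set of conjugacy classes of $G$ moving exactly four classes, and its image as a group of permutations of these four classes is the Klein four-group $K = \{1,(12)(34),(13)(24),(14)(23)\}$. Let $\mathscr{D} = \{x, x^a, x^b, x^{ab}\}$ (with $a,b$ integers) be a complete set of representatives of the four classes moved by $K$, let $\sigma \in \mathrm{Gal}(\mathbb{Q}_n:\mathbb{Q})$ be such that $\sigma\cdot x = x^a$ (up to conjugacy), and let $\chi \in \mathrm{Irr}(G)$ satisfy $\chi \ne \sigma\chi$. Then $$|C_G(x)| = |\chi(x) - \chi(x^a)|^2 + |\chi(x^b) - \chi(x^{ab})|^2.$$
   Context: $\exp(G)$ is the exponent of $G$; $\mathbb{Q}_n=\mathbb{Q}(\zeta)$ with $\zeta$ a primitive $n$-th root of unity. For $\sigma\in\mathrm{Gal}(\mathbb{Q}_n:\mathbb{Q})$ with $\sigma(\zeta)=\zeta^{r}$ ($r$ coprime to $n$), $\sigma$ acts on the complex irreducible characters $\mathrm{Irr}(G)$ by $(\sigma\chi)(g)=\sigma(\chi(g))$ and on conjugacy classes by $\sigma\cdot x^G=(x^{r})^G$; then $(\sigma\chi)(x)=\chi(\sigma\cdot x)$. *)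

(* Defs.v *)
From HB Require Import structures.
From mathcomp Require Import all_boot all_order all_algebra all_fingroup all_solvable all_field all_character.
Set Implicit Arguments. Unset Strict Implicit. Unset Printing Implicit Defensive.
Import Order.TTheory GRing.Theory Num.Theory.

Local Open Scope group_scope.

Definition zexpg (gT : finGroupType) (x : gT) (a : int) : gT :=
  match a with
  | Posz k => x ^+ k
  | Negz k => x ^- k.+1
  end.

(* Action of the Galois automorphism sigma_r : zeta |-> zeta^r of Q_n
   on a conjugacy class C of G:  sigma_r . x^G = (x^r)^G. *)
Definition galclass (gT : finGroupType) (G : {set gT}) (r : nat) (C : {set gT}) :
  {set gT} := (repr C ^+ r) ^: G.

(* C is a conjugacy class of G moved by some element of Gal(Q_n : Q),
   n = exp(G), Gal(Q_n:Q) being parametrised by the r coprime to n. *)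
Definition gal_moved (gT : finGroupType) (G : {group gT}) (C : {set gT}) : Prop :=
  C \in classes G /\
  exists r : nat, coprime r (exponent G) /\ galclass G r C <> C.

(* The Klein four-group {1,(12)(34),(13)(24),(14)(23)} as maps on 'I_4
   (points 1,2,3,4 are labelled 0,1,2,3). *)
Definition kf (s : seq nat) : {ffun 'I_4 -> 'I_4} :=
  [ffun i : 'I_4 => inord (nth 0%N s i)].

Definition klein4 : seq {ffun 'I_4 -> 'I_4} :=
  [:: kf [:: 0; 1; 2; 3]%N; kf [:: 1; 0; 3; 2]%N;
      kf [:: 2; 3; 0; 1]%N; kf [:: 3; 2; 1; 0]%N].

(* The Galois group moves exactly four classes, and under a labelling c of
   these four classes its image in Sym(moved classes) is exactly klein4. *)
Definition gal_image_klein (gT : finGroupType) (G : {group gT}) : Prop :=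
  exists c : 'I_4 -> {set gT},
    injective c /\
    (forall C, gal_moved G C <-> exists i, C = c i) /\
    (forall r, coprime r (exponent G) ->
       exists2 p, p \in klein4 & forall i, galclass G r (c i) = c (p i)) /\
    (forall p, p \in klein4 ->
       exists r, coprime r (exponent G) /\ forall i, galclass G r (c i) = c (p i)).

(* Main.v *)
Require Import Defs.
From HB Require Import structures.
From mathcomp Require Import all_boot all_order all_algebra all_fingroup all_solvable all_field all_character.
From mathcomp Require Import ring.
Import Order.TTheory GRing.Theory Num.Theory.
Set Implicit Arguments. Unset Strict Implicit. Unset Printing Implicit Defensive.

Section Grp.
Variable gT : finGroupType.
Implicit Types (x y g : gT) (G : {group gT}).

Lemma zexpgNn x n : zexpg x (- (n%:Z)) = (x ^+ n)^-1%g.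
Proof. by case: n => [|n] //=; rewrite expg0 invg1. Qed.

Lemma zexpgM x (a b : int) : zexpg (zexpg x a) b = zexpg x (a * b).
Proof.
case: a => m; case: b => k.
- by rewrite -PoszM /= -expgM.
- by rewrite NegzE mulrN -PoszM !zexpgNn /= -expgM.
- by rewrite NegzE mulNr -PoszM !zexpgNn /= expgVn -expgM.
- by rewrite !NegzE mulrNN -PoszM !zexpgNn /= expgVn invgK -expgM.
Qed.

Lemma zexpgJ x (a : int) y : zexpg (x ^ y) a = ((zexpg x a) ^ y)%g.
Proof. by case: a => k /=; rewrite ?conjXg ?conjVg ?conjXg. Qed.

Lemma zexpgXr x (a : int) r : zexpg (x ^+ r) a = ((zexpg x a) ^+ r)%g.
Proof. by case: a => k /=; rewrite -!expgM mulnC // expgVn -!expgM mulnC. Qed.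

Lemma groupZ G x (a : int) : x \in G -> zexpg x a \in G.
Proof. by case: a => k Gx /=; rewrite ?groupV groupX. Qed.

Lemma classX G x y r : (x ^: G = y ^: G)%g -> ((x ^+ r) ^: G = (y ^+ r) ^: G)%g.
Proof.
move/class_eqP=> /imsetP[g Gg ->]; apply/class_eqP.
by rewrite -conjXg memJ_class.
Qed.

Lemma classZ G x y (a : int) : (x ^: G = y ^: G)%g -> ((zexpg x a) ^: G = (zexpg y a) ^: G)%g.
Proof.
move/class_eqP=> /imsetP[g Gg ->]; apply/class_eqP.
by rewrite zexpgJ memJ_class.
Qed.

Lemma galclassE G r x : x \in G -> galclass G r (x ^: G)%g = ((x ^+ r) ^: G)%g.
Proof.
move=> Gx; rewrite /galclass.
have /imsetP[g Gg ->] : repr (x ^: G)%g \in (x ^: G)%g by apply: mem_repr (class_refl G x).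
by rewrite -conjXg classGidl.
Qed.

Lemma galclass_classes G r C : C \in classes G -> galclass G r C \in classes G.
Proof. by case/repr_classesP=> GC _; rewrite /galclass mem_classes ?groupX. Qed.

Lemma card_cent_coprime G x g m : x \in G -> coprime m (exponent G) ->
  g \in ((x ^+ m) ^: G)%g -> #|'C_G[g]%g| = #|'C_G[x]%g|.
Proof.
move=> Gx cop /class_eqP Eg.
have Cxm : 'C_G[x ^+ m]%g = 'C_G[x]%g.
  rewrite -!cent_cycle; congr (_ :&: 'C(_))%g.
  have : generator <[x]>%g (x ^+ m) by rewrite generator_coprime coprime_sym (coprime_dvdr (dvdn_exponent Gx)) // coprime_sym.
  by move/eqP.
have := Lagrange (subsetIl G 'C[g]%g); rewrite index_cent1 Eg -index_cent1 Cxm.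
rewrite -(Lagrange (subsetIl G 'C[x]%g)) => /eqP.
rewrite eqn_pmul2r // ?indexg_gt0 //.
by move/eqP.
Qed.

End Grp.
Local Open Scope ring_scope.

Lemma klein_inv p : p \in klein4 -> forall l, p (p l) = l.
Proof.
rewrite !inE => /or4P[]/eqP-> l; apply/val_inj;
  case: l => [[|[|[|[|l]]]] Hl] //=; rewrite !ffunE /= ?inordK //=.
Qed.

Lemma klein_trans (k0 k1 : 'I_4) : exists2 p, p \in klein4 & p k0 = k1.
Proof.
suff /hasP[p pK /eqP Ep] : has (fun p : {ffun 'I_4 -> 'I_4} => p k0 == k1) klein4 by exists p.
case: k0 => [[|[|[|[|k0]]]] H0] //; case: k1 => [[|[|[|[|k1]]]] H1] //;
  rewrite /= !ffunE /= -!(inj_eq val_inj) /= ?inordK //.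
Qed.

Section Chars.
Variables (gT : finGroupType) (G : {group gT}).

Lemma aut_irr_val (u : {rmorphism algC -> algC}) r j g :
  (forall z : algC, z ^+ exponent G = 1 -> u z = z ^+ r) -> g \in G ->
  u ('chi[G]_j g) = 'chi_j (g ^+ r)%g.
Proof.
move=> Hu Gg.
have [rG Dchi] := char_reprP (irr_char j).
have [e [[B uB rGg] [e1 _] _ _]] := repr_rsim_diag rG Gg.
have eN i : e 0 i ^+ exponent G = 1.
  by have /dvdnP[q ->] := dvdn_exponent Gg; rewrite mulnC exprM e1 expr1n.
have Hk k : rG (g ^+ k.+1)%g = invmx B *m diag_mx (\row_i (e 0 i ^+ k.+1)) *m B.
  elim: k => [|k IHk]; first by rewrite expg1 rGg; have -> : \row_i (e 0 i ^+ 1) = e by apply/rowP => i; rewrite mxE expr1.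
  rewrite expgSr repr_mxM ?groupX // IHk rGg.
  rewrite !mulmxA mulmxK // -[_ *m diag_mx e]mulmxA mulmx_diag.
  have E : \row_j0 ((\row_i (e 0 i ^+ k.+1)) 0 j0 * e 0 j0) = \row_i (e 0 i ^+ k.+2) :> 'rV_(rdegree rG).
    by apply/rowP => i; rewrite !mxE -exprSr.
  by rewrite E.
have trK (M : 'M_(_)) : \tr (invmx B *m M *m B) = \tr M.
  by rewrite mxtrace_mulC mulmxA mulmxV // mul1mx.
have -> : (g ^+ r = g ^+ (r + exponent G).-1.+1)%g.
  by rewrite prednK ?addn_gt0 ?exponent_gt0 ?orbT // expgD expg_exponent // mulg1.
rewrite Dchi !cfunE groupX // Gg !mulr1n Hk trK mxtrace_diag.
rewrite rGg trK mxtrace_diag rmorph_sum; apply: eq_bigr => i _.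
rewrite !mxE prednK ?addn_gt0 ?exponent_gt0 ?orbT // exprD eN mulr1.
exact: Hu.
Qed.

End Chars.
Lemma trace_perm_mx n (s : {perm 'I_n}) :
  \tr (perm_mx s : 'M[algC]_n) = #|[pred j | s j == j]|%:R.
Proof.
rewrite /mxtrace -sum1_card natr_sum [RHS]big_mkcond /=; apply: eq_bigr => i _.
by rewrite !mxE inE; case: (s i == i).
Qed.

Lemma brauer_count (gT : finGroupType) (G : {group gT}) (f q : Iirr G -> Iirr G)
  (fK : involutive f) (qK : involutive q) :
  (forall j k, character_table G (f j) k = character_table G j (q k)) ->
  #|[pred j | f j == j]| = #|[pred k | q k == k]|.
Proof.
move=> H.
pose sf := perm (inv_inj fK); pose sq := perm (inv_inj qK).
pose X := character_table G.
have uX : X \in unitmx := character_table_unit G.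
have E : perm_mx sf *m X = X *m perm_mx sq^-1.
  by rewrite -row_permE -col_permE; apply/matrixP => j k; rewrite !mxE !permE; have := H j k; rewrite !mxE.
have : \tr (perm_mx sf : 'M[algC]_(Nirr G)) = \tr (perm_mx sq^-1 : 'M[algC]_(Nirr G)).
  rewrite -[perm_mx sf](mulmxK uX) E mxtrace_mulC mulmxA mulVmx // mul1mx //.
have Ef : #|[pred j | f j == j]| = #|[pred j | sf j == j]| by apply: eq_card => j; rewrite !inE permE.
have Eq : #|[pred k | q k == k]| = #|[pred k | (sq^-1)%g k == k]|.
  by apply: eq_card => k; rewrite !inE (canF_eq (permKV sq)) permE eq_sym.
by rewrite Ef Eq !trace_perm_mx => /eqP; rewrite eqr_nat => /eqP.
Qed.

Lemma sum_split (I : finType) (f : I -> I) (fK : involutive f) (i : I) :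
  (#|[pred j | f j != j]| <= 4)%N -> f i != i ->
  exists o : option I, forall F : I -> algC, (forall j, f j = j -> F j = 0) ->
    \sum_j F j = F i + F (f i) + oapp (fun k => F k + F (f k)) 0 o.
Proof.
move=> c4 fi.
have fiK : f (f i) != f i by apply: contra fi => /eqP/(congr1 f); rewrite !fK => ->.
case: (pickP [pred k | (f k != k) && (k != i) && (k != f i)]) => [k /andP[/andP[fk ki] kfi] | none].
  exists (Some k) => F F0 /=.
  rewrite (bigD1 i) //= (bigD1 (f i)) //= (bigD1 k) /= ?ki ?kfi //.
  have fki : f k != i by apply: contra kfi => /eqP <-; rewrite fK.
  have fkfi : f k != f i by apply: contra ki => /eqP/(congr1 f); rewrite !fK => ->.
  rewrite (bigD1 (f k)) /=; last by rewrite fki fkfi fk.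
  rewrite big1 ?addr0 ?addrA // => j /andP[/andP[/andP[ji jfi] jk] jfk].
  case: (eqVneq (f j) j) => [/F0 // | fj].
  have : (#|[:: i; f i; k; f k; j]| <= #|[pred j | f j != j]|)%N.
    apply: subset_leq_card; apply/subsetP => l; rewrite !inE.
    by case/orP=> [|/orP[|/orP[|/orP[]]]] /eqP ->; rewrite ?fK // eq_sym.
  have fkk : f k != k by [].
  have -> : #|[:: i; f i; k; f k; j]| = 5%N.
    apply/card_uniqP; rewrite /= !inE !negb_or !(eq_sym i) !(eq_sym (f i)) !(eq_sym k) !(eq_sym (f k)).
    by rewrite /= ?inE ?negb_or; repeat (apply/andP; split); rewrite // eq_sym.
  by move=> H; move: (leq_trans H c4).
exists None => F F0 /=.
rewrite (bigD1 i) //= (bigD1 (f i)) //= big1 ?addr0 ?addrA // => j /andP[ji jfi].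
have := none j; rewrite /= ji jfi !andbT => /negbFE/eqP; exact: F0.
Qed.

Unset Implicit Arguments.

Theorem mainTheorem11 (gT : finGroupType) (G : {group gT})
  (x : gT) (a b : int)
  (u : {rmorphism algC -> algC}) (r : nat) (i : Iirr G) :
  gal_image_klein G ->
  x \in G ->
  (* D = {x, x^a, x^b, x^ab} is a complete set of representatives
     of the four classes moved by the Galois action *)
  (forall C, gal_moved G C <->
     C \in [:: (x ^: G)%g; (zexpg x a ^: G)%g; (zexpg x b ^: G)%g; (zexpg x (a * b)%R ^: G)%g]) ->
  uniq [:: (x ^: G)%g; (zexpg x a ^: G)%g; (zexpg x b ^: G)%g; (zexpg x (a * b)%R ^: G)%g] ->
  (* sigma in Gal(Q_n:Q), n = exp(G), given by zeta |-> zeta^r, realised as u *)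
  coprime r (exponent G) ->
  (forall z : algC, z ^+ exponent G = 1 -> u z = z ^+ r) ->
  (* sigma . x = x^a up to conjugacy *)
  ((x ^+ r) ^: G)%g = (zexpg x a ^: G)%g ->
  cfAut u 'chi_i != 'chi_i ->
  (#|'C_G[x]%g|%:R : algC) =
    `|'chi_i x - 'chi_i (zexpg x a)| ^+ 2
    + `|'chi_i (zexpg x b) - 'chi_i (zexpg x (a * b))| ^+ 2.
Proof.
move=> [cl [injc [movc [galK1 galK2]]]] Gx Hlist Huniq cop Hu Hxr Hchi.
set y := zexpg x a in Hlist Huniq Hxr *.
set z := zexpg x b in Hlist Huniq *.
set w := zexpg x (a * b) in Hlist Huniq *.
have Gy : y \in G := groupZ a Gx.
have Gz : z \in G := groupZ b Gx.
have Gw : w \in G := groupZ (a * b) Gx.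
have sig2C : forall C, C \in classes G -> galclass G r (galclass G r C) = C.
  move=> C CG.
  have [E | NE] := eqVneq (galclass G r C) C; first by rewrite !E.
  have mv : gal_moved G C by split => //; exists r; split => //; exact/eqP.
  have [k ->] := (movc C).1 mv.
  have [p pK Hp] := galK1 r cop.
  by rewrite !Hp klein_inv.
have sig2 : forall g, g \in G -> (((g ^+ r) ^+ r) ^: G = g ^: G)%g.
  move=> g Gg; have := sig2C _ (mem_classes Gg).
  by rewrite galclassE // galclassE // groupX.
have Eyr : ((y ^+ r) ^: G = x ^: G)%g.
  by rewrite -(sig2 x Gx); apply: classX; exact: esym Hxr.
have Ezr : ((z ^+ r) ^: G = w ^: G)%g.
  by rewrite /z /w -zexpgXr -zexpgM; apply: classZ; exact: Hxr.
have Ewr : ((w ^+ r) ^: G = z ^: G)%g.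
  by rewrite -(sig2 z Gz); apply: classX; exact: esym Ezr.
have [k0 Ek0] : exists k, (x ^: G)%g = cl k by apply/movc/Hlist; rewrite inE eqxx.
have [k1 Ek1] : exists k, (z ^: G)%g = cl k by apply/movc/Hlist; rewrite !inE eqxx !orbT.
have [p pK Hp] := klein_trans k0 k1.
have [r' [cop' Hr']] := galK2 p pK.
have Exr' : ((x ^+ r') ^: G = z ^: G)%g by rewrite -galclassE // Ek0 Hr' Hp -Ek1.
pose c := #|'C_G[x]%g|.
have cy : #|'C_G[y]%g| = c.
  by apply: (card_cent_coprime Gx cop); apply/class_eqP; rewrite Hxr.
have cz : #|'C_G[z]%g| = c.
  by apply: (card_cent_coprime Gx cop'); apply/class_eqP; rewrite Exr'.
have cw : #|'C_G[w]%g| = c.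
  apply: (card_cent_coprime (m := (r' * r)%N) Gx); first by rewrite coprimeMl cop cop'.
  by apply/class_eqP; rewrite expgM -Ezr; apply: classX; rewrite Exr'.
move: Huniq; rewrite /= !inE !negb_or => /and4P[/and3P[nxy nxz nxw] /andP[nyz nyw] nzw _].
have nyx : (y ^: G != x ^: G)%g by rewrite eq_sym.
have nwz : (w ^: G != z ^: G)%g by rewrite eq_sym.
have notin g h : (g ^: G != h ^: G)%g -> (g \in h ^: G)%g = false.
  by move=> N; apply/negbTE; apply: contra N => /class_eqP ->.
pose S g h := \sum_j 'chi[G]_j g * ('chi_j h)^*.
have Sd g : g \in G -> S g g = #|'C_G[g]%g|%:R.
  by move=> Gg; rewrite /S second_orthogonality_relation // class_refl.
have So g h : h \in G -> (g ^: G != h ^: G)%g -> S g h = 0.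
  by move=> Gh N; rewrite /S second_orthogonality_relation // notin.
pose f : Iirr G -> Iirr G := aut_Iirr u.
have fval j g : g \in G -> 'chi_(f j) g = 'chi_j (g ^+ r)%g.
  by move=> Gg; rewrite aut_IirrE cfunE; apply: aut_irr_val.
have chiC j g h : (g ^: G = h ^: G)%g -> 'chi[G]_j g = 'chi_j h.
  by move=> E; rewrite -(cfun_repr _ g) E cfun_repr.
have fK : involutive f.
  move=> j; apply: irr_inj; apply/cfunP => g.
  case: (boolP (g \in G)) => Gg; last by rewrite !cfun0.
  by rewrite fval // fval ?groupX //; exact: chiC (sig2 g Gg).
pose A j := 'chi[G]_j x - 'chi_j y.
pose B j := 'chi[G]_j z - 'chi_j w.
have Af j : A (f j) = - A j.
  by rewrite /A !fval // (chiC _ _ _ Hxr) (chiC _ _ _ Eyr) opprB.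
have Bf j : B (f j) = - B j.
  by rewrite /B !fval // (chiC _ _ _ Ezr) (chiC _ _ _ Ewr) opprB.
have fix0 (P : algC) : P = - P -> P = 0.
  by move/eqP; rewrite -subr_eq0 opprK -mulr2n mulrn_eq0 /= => /eqP.
have A0 j : f j = j -> A j = 0 by move=> E; apply: fix0; have := Af j; rewrite E.
have B0 j : f j = j -> B j = 0 by move=> E; apply: fix0; have := Bf j; rewrite E.
pose q : Iirr G -> Iirr G := fun k => class_Iirr G (galclass G r (irr_class k)).
have qK : involutive q.
  by move=> k; rewrite /q class_IirrK ?galclass_classes ?irr_classP // sig2C ?irr_classP // irr_classK.
have Hfq j k : character_table G (f j) k = character_table G j (q k).
  have Gk : repr (irr_class k) \in G by case/repr_classesP: (irr_classP k).
  by rewrite !mxE fval // /q class_IirrK ?galclass_classes ?irr_classP // /galclass cfun_repr.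
have cnt := brauer_count fK qK Hfq.
have c4 : (#|[pred j | f j != j]| <= 4)%N.
  have E1 := cardC [pred j | f j == j]; have E2 := cardC [pred k | q k == k].
  have -> : #|[pred j | f j != j]| = #|[predC [pred j | f j == j]]| by apply: eq_card.
  have -> : #|[predC [pred j | f j == j]]| = #|[predC [pred k | q k == k]]|.
    by apply/eqP; rewrite -(eqn_add2l #|[pred j | f j == j]|) E1 cnt E2.
  rewrite -(card_imset _ (can_inj (@irr_classK _ G))).
  apply: leq_trans (card_size [:: (x ^: G)%g; (y ^: G)%g; (z ^: G)%g; (w ^: G)%g]).
  apply: subset_leq_card; apply/subsetP => C /imsetP[k qk ->]; rewrite !inE in qk.
  suff : gal_moved G (irr_class k) by move/Hlist.
  split; first exact: irr_classP.
  exists r; split => // E; move: qk; rewrite /q E irr_classK eqxx.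
  done.
have fi : f i != i by apply: contra Hchi => /eqP E; rewrite -aut_IirrE -/f E.
have [o Ho] := sum_split fK c4 fi.
have Fsum (F : Iirr G -> algC) : (forall j, f j = j -> F j = 0) -> (forall j, F (f j) = F j) ->
    \sum_j F j = (F i + oapp F 0 o) *+ 2.
  move=> F0 Ff; rewrite Ho // Ff; case: o {Ho} => [k|] /=; rewrite ?Ff ?addr0 mulr2n //.
  by rewrite -!addrA; congr (_ + _); rewrite addrCA.
have ocase (F : Iirr G -> algC) (H : Iirr G -> algC) (K : Iirr G -> algC) :
    (forall j, F j = H j * (K j)^*) -> oapp F 0 o = oapp H 0 o * (oapp K 0 o)^*.
  by move=> E; case: o {Ho Fsum} => [k|] /=; rewrite ?E ?mul0r.
have twice (X Y : algC) : X *+ 2 = Y *+ 2 -> X = Y.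
  by move/eqP; rewrite -subr_eq0 -mulrnBl mulrn_eq0 /= subr_eq0 => /eqP.
have expand (g1 h1 g2 h2 : gT) : \sum_j ('chi[G]_j g1 - 'chi_j h1) * ('chi_j g2 - 'chi_j h2)^*
    = S g1 g2 - S g1 h2 - S h1 g2 + S h1 h2.
  rewrite /S -!sumrB -big_split /=; apply: eq_bigr => j _; rewrite rmorphB /=; ring.
pose cc : algC := c%:R.
pose al := A i. pose be := B i. pose ga := oapp A 0 o. pose de := oapp B 0 o.
have h1 : cc = al * al^* + ga * ga^*.
  have := Fsum (fun j => A j * (A j)^*) (fun j E => etrans (congr1 (fun t => t * (A j)^*) (A0 j E)) (mul0r _))
    (fun j => etrans (congr1 (fun t => t * t^*) (Af j)) (etrans (congr1 _ (rmorphN _ _)) (mulrNN _ _))).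
  rewrite /= expand Sd // Sd // cy (So _ _ Gy nxy) (So _ _ Gx nyx) subr0 subr0 => H.
  by apply: twice; rewrite (ocase _ A A) // in H; rewrite /cc /al /ga -H mulr2n.
have h2 : cc = be * be^* + de * de^*.
  have := Fsum (fun j => B j * (B j)^*) (fun j E => etrans (congr1 (fun t => t * (B j)^*) (B0 j E)) (mul0r _))
    (fun j => etrans (congr1 (fun t => t * t^*) (Bf j)) (etrans (congr1 _ (rmorphN _ _)) (mulrNN _ _))).
  rewrite /= expand Sd // Sd // cz cw (So _ _ Gw nzw) (So _ _ Gz nwz) subr0 subr0 => H.
  by apply: twice; rewrite (ocase _ B B) // in H; rewrite /cc /be /de -H mulr2n.
have h3 : al * be^* + ga * de^* = 0.
  have := Fsum (fun j => A j * (B j)^*) (fun j E => etrans (congr1 (fun t => t * (B j)^*) (A0 j E)) (mul0r _))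
    (fun j => etrans (congr1 (fun t => A (f j) * t^*) (Bf j)) (etrans (congr1 (fun t => t * _) (Af j)) (etrans (congr1 _ (rmorphN _ _)) (mulrNN _ _)))).
  rewrite /= expand (So _ _ Gz nxz) (So _ _ Gw nxw) (So _ _ Gz nyz) (So _ _ Gw nyw) !subr0 addr0 => H.
  by apply: twice; rewrite (ocase _ A B) // in H; rewrite /al /be /ga /de -H mul0rn.
have hPQ : (al * al^*) * (be * be^*) = (ga * ga^*) * (de * de^*).
  have e1 : (al * al^*) * (be * be^*) = (al * be^*) * (al * be^*)^*.
    by rewrite rmorphM /= conjCK; ring.
  have e2 : (ga * ga^*) * (de * de^*) = (ga * de^*) * (ga * de^*)^*.
    by rewrite rmorphM /= conjCK; ring.
  have e3 : al * be^* = - (ga * de^*) by apply/eqP; rewrite -addr_eq0 h3.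
  by rewrite e1 e2 e3 rmorphN mulrNN.
have eP : cc - al * al^* = ga * ga^* by rewrite h1 addrC addKr.
have eQ : cc - be * be^* = de * de^* by rewrite h2 addrC addKr.
have : cc * (cc - (al * al^* + be * be^*)) = 0.
  rewrite (_ : cc * (cc - (al * al^* + be * be^*)) = (cc - al * al^*) * (cc - be * be^*) - (al * al^*) * (be * be^*)); last by ring.
  by rewrite eP eQ hPQ subrr.
move/eqP; rewrite mulf_eq0 => /orP[|]; first by rewrite /cc /c pnatr_eq0 -leqn0 leqNgt cardG_gt0.
by rewrite subr_eq0 => /eqP E; rewrite !normCK -/cc E.
Qed.
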